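(* Let $0<q<1$, $m\in\{0,1,2,\dots\}$, $\lambda\in\left]0,q^m(1-q)^{-1}\right[$, and let $\mathcal{G}_X(t)=\sum_{j\ge0}t^jp_j(\lambda;q,m)$ be the probability generating function of $X\sim\mathscr{P}(\lambda;q,m)$ (defined in the context). Then: (1) for $m=0$, $\mathcal{G}_X(t)=\dfrac{((1-q)\lambda;q)_\infty}{((1-q)\lambda t;q)_\infty}$ for real $|t|\le1$; (2) for $m\neq0$ and fixed $\lambda>0$ and real $t$ with $0<|t|\le 1$, \[ \lim_{q\to1^-}\mathcal{G}_X(t)=t^m\exp\big(\lambda(t-1)\big)\,L_m^{(0)}\!\left(\lambda\left(2-\left(t+\tfrac1t\right)\right)\right), \] where $L_m^{(0)}(x)=\sum_{k=0}^m\binom{m}{k}\frac{(-x)^k}{k!}$ is the Laguerre polynomial.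
   Context: For $a\in\mathbb{C}$: $(a;q)_0=1$, $(a;q)_n=\prod_{k=0}^{n-1}(1-aq^k)$, $(a;q)_\infty=\prod_{k\ge0}(1-aq^k)$. The Wall polynomial is $P_n(x;a|q)=\sum_{k=0}^n\frac{(q^{-n};q)_k}{(aq;q)_k}\frac{(qx)^k}{(q;q)_k}$. Write $m\wedge j=\min(m,j)$, $m\vee j=\max(m,j)$, $\binom{n}{2}=n(n-1)/2$. For $0<\lambda<q^m/(1-q)$ set $\mathcal{N}_{q,m}(\lambda)=\frac{(q^{1-m}(1-q)\lambda;q)_m}{q^m\,(q^{-m}(1-q)\lambda;q)_\infty}$ and \[ p_j(\lambda;q,m)=\frac{q^{2\binom{m\wedge j}{2}}(1-q)^{|m-j|}\lambda^{|m-j|}}{\mathcal{N}_{q,m}(\lambda)\,q^{mj}(q;q)_j(q;q)_m}\left(\frac{(q;q)_{m\vee j}}{(q;q)_{|m-j|}}P_{m\wedge j}\big((1-q)\lambda;q^{|m-j|}\,|\,q\big)\right)^2,\quad j=0,1,2,\dots, \] the probability mass function of the generalized Euler distribution $\mathscr{P}(\lambda;q,m)$. Note that $\lambda<q^m/(1-q)$ holds for all $q$ close enough to $1$. *)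

(* Defs.v *)
From Stdlib Require Import Reals Factorial.
From Coquelicot Require Import Coquelicot.
Open Scope R_scope.

Fixpoint qpoch (a q : R) (n : nat) : R :=
  match n with
  | O => 1
  | S n' => qpoch a q n' * (1 - a * q ^ n')
  end.

Definition qpoch_inf (a q : R) : R := real (Lim_seq (fun n => qpoch a q n)).

Definition wall (n : nat) (x a q : R) : R :=
  sum_f_R0 (fun k => qpoch (/ q ^ n) q k / qpoch (a * q) q k
                     * (q * x) ^ k / qpoch q q k) n.

Definition binom2 (n : nat) : nat := Nat.div (n * (n - 1)) 2.

Definition absdiff (m j : nat) : nat := Nat.max m j - Nat.min m j.

Definition Nqm (q : R) (m : nat) (lam : R) : R :=
  qpoch (q * / q ^ m * (1 - q) * lam) q m
  / (q ^ m * qpoch_inf (/ q ^ m * (1 - q) * lam) q).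

Definition pj (lam q : R) (m j : nat) : R :=
  let d := absdiff m j in
  let mn := Nat.min m j in
  let mx := Nat.max m j in
  q ^ (2 * binom2 mn) * (1 - q) ^ d * lam ^ d
  / (Nqm q m lam * q ^ (m * j) * qpoch q q j * qpoch q q m)
  * (qpoch q q mx / qpoch q q d * wall mn ((1 - q) * lam) (q ^ d) q) ^ 2.

Definition pgf (lam q : R) (m : nat) (t : R) : R :=
  Series (fun j => t ^ j * pj lam q m j).

Definition laguerre0 (m : nat) (x : R) : R :=
  sum_f_R0 (fun k => INR (fact m) / (INR (fact k) * INR (fact (m - k)))
                     * (- x) ^ k / INR (fact k)) m.

(* Main.v *)
Require Import Defs.
From Stdlib Require Import Reals Lia Lra Factorial.
From Coquelicot Require Import Coquelicot.
Open Scope R_scope.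

Lemma ballR x e y : ball x e y <-> Rabs (y - x) < e.
Proof. split; intro H; exact H. Qed.

Lemma lim_abs_le (F : (R -> Prop) -> Prop) {FF : ProperFilter F} (h : R -> R) l B :
  filterlim h F (locally l) -> F (fun q => Rabs (h q) <= B) -> Rabs l <= B.
Proof.
  intros Hl HB. destruct (Rle_or_lt (Rabs l) B) as [H|H]; [exact H|].
  exfalso. assert (Hp : 0 < Rabs l - B) by lra.
  pose proof (proj1 (filterlim_locally h l) Hl (mkposreal _ Hp)) as H1.
  destruct (filter_ex _ (filter_and _ _ H1 HB)) as [x [Hx1 Hx2]].
  apply (proj1 (ballR _ _ _)) in Hx1. simpl in Hx1.
  assert (Rabs l <= Rabs (h x) + Rabs (h x - l)).
  { replace l with (h x - (h x - l)) at 1 by ring. apply Rabs_triang_inv2 || idtac.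
    pose proof (Rabs_triang (h x) (-(h x - l))). rewrite Rabs_Ropp in H0.
    replace (h x - (h x - l)) with (h x + - (h x - l)) by ring. exact H0. }
   lra.
Qed.

Lemma sum_lim (F : (R -> Prop) -> Prop) {FF : Filter F} (f : R -> nat -> R) (g : nat -> R) :
  (forall j, filterlim (fun q => f q j) F (locally (g j))) ->
  forall N, filterlim (fun q => sum_f_R0 (f q) N) F (locally (sum_f_R0 g N)).
Proof.
  intros H N. induction N as [|N IH]; simpl.
  - apply H.
  - apply (filterlim_comp_2 _ _ Rplus IH (H (S N))).
    exact (filterlim_plus (V := R_NormedModule) (sum_f_R0 g N) (g (S N))).
Qed.

Lemma tail_bound (a : nat -> R) K r N : 0 <= r < 1 ->
  (forall j, (N < j)%nat -> Rabs (a j) <= K * r ^ j) ->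
  ex_series a /\ Rabs (Series a - sum_f_R0 a N) <= K * r ^ (S N) / (1 - r).
Proof.
  intros Hr Hb.
  set (b := fun k => a (S N + k)%nat).
  assert (Hg : is_series (fun k => K * r ^ S N * r ^ k) (K * r ^ S N * / (1 - r))).
  { apply (is_series_scal (K * r ^ S N) (fun k => r ^ k)).
    apply is_series_geom. rewrite Rabs_right; lra. }
  assert (Hbb : forall k, Rabs (b k) <= K * r ^ S N * r ^ k).
  { intro k. unfold b. rewrite Rmult_assoc, <- pow_add. apply Hb. lia. }
  assert (Hexb : ex_series (fun k => Rabs (b k))).
  { apply (ex_series_le (V := R_CompleteNormedModule) _ (fun k => K * r ^ S N * r ^ k)).
    - intro k. unfold norm; simpl. unfold abs; simpl. rewrite Rabs_Rabsolu. apply Hbb.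
    - eexists; exact Hg. }
  assert (Hexa : ex_series a).
  { apply (ex_series_incr_n a (S N)). apply ex_series_Rabs. exact Hexb. }
  split; [exact Hexa|].
  rewrite (Series_incr_n a (S N)); [|lia|exact Hexa]. simpl pred.
  replace (sum_f_R0 a N + Series (fun k => a (S N + k)%nat) - sum_f_R0 a N)
    with (Series b) by (unfold b; ring).
  eapply Rle_trans. apply Series_Rabs. exact Hexb.
  eapply Rle_trans. apply Series_le. intro k; split; [apply Rabs_pos| apply Hbb].
  eexists; exact Hg.
  rewrite (is_series_unique _ _ Hg). unfold Rdiv. lra.
Qed.

Lemma tannery (F : (R -> Prop) -> Prop) {FF : ProperFilter F}
  (f : R -> nat -> R) (g : nat -> R) (K r : R) (J : nat) :
  0 <= r < 1 ->
  (forall j, filterlim (fun q => f q j) F (locally (g j))) ->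
  F (fun q => forall j, (J <= j)%nat -> Rabs (f q j) <= K * r ^ j) ->
  filterlim (fun q => Series (f q)) F (locally (Series g)).
Proof.
  intros Hr Hlim Hdom.
  assert (Hg : forall j, (J <= j)%nat -> Rabs (g j) <= K * r ^ j).
  { intros j Hj. apply (lim_abs_le F (fun q => f q j)). apply Hlim.
    apply (filter_imp _ _ (fun q H => H j Hj) Hdom). }
  apply filterlim_locally. intro eps.
  assert (HK : exists N, (J <= N)%nat /\ 2 * Rabs K * r ^ S N / (1 - r) < eps / 2).
  { pose proof (is_lim_seq_geom r) as Hgeo.
    assert (Hr1 : Rabs r < 1) by (rewrite Rabs_right; lra).
    specialize (Hgeo Hr1). apply is_lim_seq_spec in Hgeo.
    assert (Hc : 0 < eps / 2 * (1 - r) / (2 * Rabs K + 1)).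
    { apply Rdiv_lt_0_compat. apply Rmult_lt_0_compat. destruct eps; simpl; lra. lra.
      pose proof (Rabs_pos K); lra. }
    destruct (Hgeo (mkposreal _ Hc)) as [N0 HN0].
    exists (J + N0)%nat. split; [lia|].
    specialize (HN0 (S (J + N0)) ltac:(lia)). simpl in HN0.
    rewrite Rminus_0_r, Rabs_right in HN0 by (apply Rle_ge; apply Rmult_le_pos; [lra|apply pow_le; lra]).
    simpl pow in HN0 |- *.
    set (x := r * r ^ (J + N0)) in *.
    assert (0 <= x) by (unfold x; apply Rmult_le_pos; [lra|apply pow_le; lra]).
    assert (Hk : 0 <= Rabs K) by apply Rabs_pos.
    apply Rmult_lt_compat_l with (r := 2 * Rabs K + 1) in HN0; [|lra].
    replace ((2 * Rabs K + 1) * (eps / 2 * (1 - r) / (2 * Rabs K + 1))) with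
      (eps / 2 * (1 - r)) in HN0 by (field; lra).
    apply (Rmult_lt_reg_r (1 - r)); [lra|].
    replace (2 * Rabs K * x / (1 - r) * (1 - r)) with (2 * Rabs K * x) by (field; lra).
    nra. }
  destruct HK as [N [HJN HN]].
  assert (Hs := sum_lim F f g Hlim N).
  assert (Hhalf : 0 < eps / 2) by (destruct eps; simpl; lra).
  pose proof (proj1 (filterlim_locally _ _) Hs (mkposreal _ Hhalf)) as Hs'.
  apply (filter_imp _ _ (fun q H => H) ) in Hs'.
  generalize (filter_and _ _ Hs' Hdom). apply filter_imp.
  intros q [H1 H2]. apply (proj1 (ballR _ _ _)) in H1. simpl in H1. apply (proj2 (ballR _ _ _)).
  destruct (tail_bound (f q) K r N Hr) as [_ T1].
  { intros j Hj. apply H2. lia. }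
  destruct (tail_bound g K r N Hr) as [_ T2].
  { intros j Hj. apply Hg. lia. }
  assert (HKK : K * r ^ S N / (1 - r) <= Rabs K * r ^ S N / (1 - r)).
  { unfold Rdiv. apply Rmult_le_compat_r. apply Rlt_le, Rinv_0_lt_compat; lra.
    apply Rmult_le_compat_r. apply pow_le; lra. apply Rle_abs. }
  replace (Series (f q) - Series g) with
    ((Series (f q) - sum_f_R0 (f q) N) + (sum_f_R0 (f q) N - sum_f_R0 g N)
     - (Series g - sum_f_R0 g N)) by ring.
  eapply Rle_lt_trans. apply Rabs_triang.
  eapply Rle_lt_trans. apply Rplus_le_compat_r. apply Rabs_triang.
  rewrite Rabs_Ropp.
  replace (2 * Rabs K * r ^ S N / (1 - r)) with (Rabs K * r ^ S N / (1 - r) + Rabs K * r ^ S N / (1 - r)) in HN by (field; lra).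
  lra.
Qed.

Lemma isR_scal c (a : nat -> R) l : is_series a l -> is_series (fun n => c * a n) (c * l).
Proof. intro H. exact (is_series_scal c a l H). Qed.
Lemma isR_plus (a b : nat -> R) la lb : is_series a la -> is_series b lb ->
  is_series (fun n => a n + b n) (la + lb).
Proof. intros H1 H2. exact (is_series_plus a b la lb H1 H2). Qed.
Lemma isR_minus (a b : nat -> R) la lb : is_series a la -> is_series b lb ->
  is_series (fun n => a n - b n) (la - lb).
Proof. intros H1 H2. exact (is_series_minus a b la lb H1 H2). Qed.
Lemma isR_decr1 (a : nat -> R) l : is_series (fun k => a (S k)) (l - a O) -> is_series a l.
Proof. intro H. apply is_series_decr_1. exact H. Qed.
Lemma isR_ext (a b : nat -> R) l : (forall n, a n = b n) -> is_series a l -> is_series b l.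
Proof. intros H1 H2. exact (is_series_ext a b l H1 H2). Qed.
Lemma exR_le (a b : nat -> R) : (forall n, Rabs (a n) <= b n) -> ex_series b -> ex_series a.
Proof. intros H1 H2. apply (ex_series_le (V := R_CompleteNormedModule) a b); auto. Qed.

Lemma Series_zero : Series (fun _ => 0) = 0.
Proof.
  rewrite (Series_ext (fun _ => 0) (fun n => 0 * 0)); [rewrite Series_scal_l; ring| intros; ring].
Qed.

Fixpoint qint (q : R) (n : nat) : R :=
  match n with O => 0 | S n' => qint q n' + q ^ n' end.
Fixpoint qfact (q : R) (n : nat) : R :=
  match n with O => 1 | S n' => qfact q n' * qint q (S n') end.

Lemma qint_eq q n : (1 - q) * qint q n = 1 - q ^ n.
Proof. induction n; simpl; [ring|]. rewrite Rmult_plus_distr_l, IHn. ring. Qed.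

Lemma qpoch_qq q n : qpoch q q n = (1 - q) ^ n * qfact q n.
Proof.
  induction n; simpl; [ring|]. rewrite IHn.
  replace (1 - q * q ^ n) with ((1 - q) * qint q (S n)) by (rewrite qint_eq; simpl; ring).
  simpl. ring.
Qed.

Lemma qint_ge1 q n : 0 <= q -> (1 <= n)%nat -> 1 <= qint q n.
Proof.
  intros Hq Hn. induction n; [lia|]. destruct n. simpl; lra.
  simpl in *. assert (1 <= qint q n + q ^ n) by (apply IHn; lia).
  pose proof (pow_le q (S n) Hq). simpl in H0. lra.
Qed.

Lemma qint_pos q n : 0 <= q -> 0 <= qint q n.
Proof. intro Hq; induction n; simpl; [lra|]. pose proof (pow_le q n Hq); lra. Qed.

Lemma qfact_ge1 q n : 0 <= q -> 1 <= qfact q n.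
Proof.
  intro Hq; induction n; simpl; [lra|].
  pose proof (qint_ge1 q (S n) Hq ltac:(lia)). simpl in H.
  replace 1 with (1 * 1) by ring. apply Rmult_le_compat; lra.
Qed.

Lemma qpoch_qq_pos q n : 0 < q < 1 -> 0 < qpoch q q n.
Proof.
  intro Hq. rewrite qpoch_qq. apply Rmult_lt_0_compat. apply pow_lt; lra.
  pose proof (qfact_ge1 q n ltac:(lra)); lra.
Qed.

Definition Eul (q z : R) := Series (fun n => z ^ n / qpoch q q n).

Lemma pow_small q n : 0 < q < 1 -> 0 < q ^ n <= 1.
Proof. intro Hq. split. apply pow_lt; lra. induction n; simpl; [lra|].
  pose proof (pow_lt q n ltac:(lra)). nra. Qed.

Lemma Eul_ex_abs q z : 0 < q < 1 -> Rabs z < 1 -> ex_series (fun n => Rabs (z ^ n / qpoch q q n)).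
Proof.
  intros Hq Hz.
  assert (Hgen : forall z, z <> 0 -> Rabs z < 1 -> ex_series (fun n => Rabs (z ^ n / qpoch q q n))).
  { clear z Hz. intros z Hz0 Hz.
    apply (ex_series_DAlembert _ (Rabs z)); [exact Hz| |].
    - intro n. unfold Rdiv. apply Rmult_integral_contrapositive. split.
      apply pow_nonzero; auto. apply Rinv_neq_0_compat. pose proof (qpoch_qq_pos q n Hq); lra.
    - apply is_lim_seq_ext with (u := fun n => Rabs z * / (1 - q * q ^ n)).
      + intro n. simpl qpoch. simpl pow.
        pose proof (qpoch_qq_pos q n Hq). pose proof (pow_small q n Hq).
        assert (0 < 1 - q * q ^ n) by nra.
        assert (z ^ n <> 0) by (apply pow_nonzero; auto).
        replace (z * z ^ n / (qpoch q q n * (1 - q * q ^ n)) / (z ^ n / qpoch q q n))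
          with (z * / (1 - q * q ^ n)) by (field; repeat split; lra).
        rewrite Rabs_mult, (Rabs_right (/ _)); [reflexivity|].
        apply Rle_ge, Rlt_le, Rinv_0_lt_compat; lra.
      + assert (HH : Rabs z * / (1 - q * 0) = Rabs z) by (field; lra).
        assert (HL : is_lim_seq (fun n => Rabs z * / (1 - q * q ^ n)) (Rabs z * / (1 - q * 0))).
        { apply is_lim_seq_mult'. apply is_lim_seq_const.
          apply (is_lim_seq_inv _ (1 - q * 0)).
          apply is_lim_seq_minus'. apply is_lim_seq_const.
          apply is_lim_seq_mult'. apply is_lim_seq_const. apply is_lim_seq_geom.
          rewrite Rabs_right; lra. intro H; injection H; lra. }
        rewrite HH in HL. exact HL. }
  destruct (Req_dec z 0) as [->|Hz0].
  - apply (exR_le _ (fun n => Rabs ((/2) ^ n / qpoch q q n))).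
    + intro n. rewrite Rabs_Rabsolu. destruct n. simpl; lra.
      simpl. rewrite Rmult_0_l. unfold Rdiv. rewrite Rmult_0_l, Rabs_R0. apply Rabs_pos.
    + apply Hgen. lra. rewrite Rabs_right; lra.
  - apply Hgen; auto.
Qed.

Lemma Eul_ex q z : 0 < q < 1 -> Rabs z < 1 -> ex_series (fun n => z ^ n / qpoch q q n).
Proof. intros; apply ex_series_Rabs, Eul_ex_abs; auto. Qed.

Lemma Eul_func q z : 0 < q < 1 -> Rabs z < 1 -> Eul q z * (1 - z) = Eul q (q * z).
Proof.
  intros Hq Hz.
  assert (Hqz : Rabs (q * z) < 1).
  { rewrite Rabs_mult, Rabs_right by lra. pose proof (Rabs_pos z). nra. }
  pose proof (Series_correct _ (Eul_ex q z Hq Hz)) as H1.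
  pose proof (Series_correct _ (Eul_ex q (q * z) Hq Hqz)) as H2.
  pose proof (isR_minus _ _ _ _ H1 H2) as H3.
  assert (H4 : is_series (fun n => z ^ n / qpoch q q n - (q * z) ^ n / qpoch q q n) (z * Eul q z)).
  { apply isR_decr1.
    assert (E0 : z * Eul q z - (z ^ 0 / qpoch q q 0 - (q * z) ^ 0 / qpoch q q 0) = z * Eul q z)
      by (simpl; field).
    rewrite E0.
    apply isR_ext with (a := fun n => z * (z ^ n / qpoch q q n)).
    - intro n. pose proof (qpoch_qq_pos q n Hq).
      assert (0 < 1 - q * q ^ n) by (pose proof (pow_small q n Hq); nra).
      rewrite Rpow_mult_distr. simpl. field. lra.
    - apply isR_scal. exact H1. }
  pose proof (is_series_unique _ _ H3). pose proof (is_series_unique _ _ H4).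
  unfold Eul in *. lra.
Qed.

Lemma Eul_iter q z n : 0 < q < 1 -> Rabs z < 1 -> qpoch z q n * Eul q z = Eul q (q ^ n * z).
Proof.
  intros Hq Hz. induction n; simpl. rewrite Rmult_1_l, Rmult_1_l; reflexivity.
  assert (Hn : Rabs (q ^ n * z) < 1).
  { rewrite Rabs_mult, Rabs_right by (apply Rle_ge, pow_le; lra).
    pose proof (pow_small q n Hq). pose proof (Rabs_pos z). nra. }
  replace (q * q ^ n * z) with (q * (q ^ n * z)) by ring.
  rewrite <- Eul_func by auto. rewrite <- IHn. ring.
Qed.

Lemma Eul_near1 q z w : 0 < q < 1 -> 0 < Rabs z < 1 -> Rabs w <= Rabs z ->
  Rabs (Eul q w - 1) <= Rabs w * (Series (fun n => Rabs (z ^ S n / qpoch q q (S n))) / Rabs z).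
Proof.
  intros Hq Hz Hw.
  assert (Hw1 : Rabs w < 1) by lra.
  unfold Eul. rewrite Series_incr_1 by (apply Eul_ex; auto).
  simpl pow at 1. simpl qpoch at 1. unfold Rdiv at 1. rewrite Rinv_1, Rmult_1_l.
  replace (1 + Series (fun k => w ^ S k / qpoch q q (S k)) - 1) with
    (Series (fun k => w ^ S k / qpoch q q (S k))) by ring.
  assert (Hex : ex_series (fun k => Rabs (z ^ S k / qpoch q q (S k)))).
  { apply (ex_series_incr_1 (fun k => Rabs (z ^ k / qpoch q q k))). apply Eul_ex_abs; auto. lra. }
  assert (Hexw : ex_series (fun k => Rabs (w ^ S k / qpoch q q (S k)))).
  { apply (ex_series_incr_1 (fun k => Rabs (w ^ k / qpoch q q k))). apply Eul_ex_abs; auto. }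
  eapply Rle_trans. apply Series_Rabs. exact Hexw.
  replace (Rabs w * (Series (fun n => Rabs (z ^ S n / qpoch q q (S n))) / Rabs z)) with
    (Rabs w / Rabs z * Series (fun n => Rabs (z ^ S n / qpoch q q (S n)))) by (field; lra).
  rewrite <- Series_scal_l.
  apply Series_le.
  - intro n. split. apply Rabs_pos.
    pose proof (qpoch_qq_pos q (S n) Hq).
    set (p := qpoch q q (S n)) in *.
    assert (Ha : forall x, Rabs (x ^ S n / p) = Rabs x ^ S n / p).
    { intro x. unfold Rdiv. rewrite Rabs_mult, <- RPow_abs, Rabs_inv, (Rabs_right p); lra. }
    rewrite !Ha. simpl pow.
    assert (Hp : Rabs w ^ n <= Rabs z ^ n) by (apply pow_incr; split; [apply Rabs_pos|lra]).
    assert (0 <= Rabs w ^ n) by (apply pow_le, Rabs_pos).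
    assert (0 < / p) by (apply Rinv_0_lt_compat; lra).
    replace (Rabs w / Rabs z * (Rabs z * Rabs z ^ n / p))
      with (Rabs w * Rabs z ^ n * / p) by (field; lra).
    unfold Rdiv. apply Rmult_le_compat_r. lra.
    apply Rmult_le_compat_l. apply Rabs_pos. exact Hp.
  - apply (ex_series_scal_l (V := R_NormedModule) (Rabs w / Rabs z)) in Hex. exact Hex.
Qed.

Lemma Eul_lim q z : 0 < q < 1 -> Rabs z < 1 -> is_lim_seq (fun n => Eul q (q ^ n * z)) 1.
Proof.
  intros Hq Hz. destruct (Req_dec z 0) as [->|Hz0].
  - apply is_lim_seq_ext with (u := fun _ => 1). intro n. rewrite Rmult_0_r.
    unfold Eul. rewrite Series_incr_1. rewrite (Series_ext _ (fun _ => 0)). rewrite Series_zero. simpl. field.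
    intro k. simpl. unfold Rdiv; ring. apply Eul_ex; [auto|rewrite Rabs_R0; lra].
    apply is_lim_seq_const.
  - assert (Hz' : 0 < Rabs z < 1) by (split; [apply Rabs_pos_lt|]; auto).
    set (C := Series (fun n => Rabs (z ^ S n / qpoch q q (S n))) / Rabs z).
    apply is_lim_seq_le_le with (u := fun n => 1 - Rabs (q ^ n * z) * C) (w := fun n => 1 + Rabs (q ^ n * z) * C).
    + intro n. assert (Hw : Rabs (q ^ n * z) <= Rabs z).
      { rewrite Rabs_mult, (Rabs_right (q ^ n)) by (apply Rle_ge, pow_le; lra).
        pose proof (pow_small q n Hq). pose proof (Rabs_pos z). nra. }
      pose proof (Eul_near1 q z (q ^ n * z) Hq Hz' Hw). fold C in H.
      apply Rabs_le_between in H. lra.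
    + replace 1 with (1 - 0 * Rabs z * C) at 1 by ring.
      apply is_lim_seq_minus'. apply is_lim_seq_const.
      apply is_lim_seq_ext with (u := fun n => q ^ n * Rabs z * C).
      intro n. rewrite Rabs_mult, (Rabs_right (q ^ n)) by (apply Rle_ge, pow_le; lra). reflexivity.
      apply is_lim_seq_mult'. apply is_lim_seq_mult'. apply is_lim_seq_geom. rewrite Rabs_right; lra.
      apply is_lim_seq_const. apply is_lim_seq_const.
    + replace 1 with (1 + 0 * Rabs z * C) at 1 by ring.
      apply is_lim_seq_plus'. apply is_lim_seq_const.
      apply is_lim_seq_ext with (u := fun n => q ^ n * Rabs z * C).
      intro n. rewrite Rabs_mult, (Rabs_right (q ^ n)) by (apply Rle_ge, pow_le; lra). reflexivity.
      apply is_lim_seq_mult'. apply is_lim_seq_mult'. apply is_lim_seq_geom. rewrite Rabs_right; lra.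
      apply is_lim_seq_const. apply is_lim_seq_const.
Qed.

Lemma Eul_nz q z : 0 < q < 1 -> Rabs z < 1 -> Eul q z <> 0.
Proof.
  intros Hq Hz H0.
  pose proof (Eul_lim q z Hq Hz) as Hl.
  apply is_lim_seq_ext with (v := fun _ => 0) in Hl.
  - apply is_lim_seq_unique in Hl. rewrite Lim_seq_const in Hl. injection Hl; lra.
  - intro n. rewrite <- Eul_iter by auto. rewrite H0; ring.
Qed.

Lemma qpoch_inf_Eul q z : 0 < q < 1 -> Rabs z < 1 -> qpoch_inf z q = / Eul q z.
Proof.
  intros Hq Hz. unfold qpoch_inf.
  assert (is_lim_seq (fun n => qpoch z q n) (/ Eul q z)).
  { apply is_lim_seq_ext with (u := fun n => Eul q (q ^ n * z) * / Eul q z).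
    intro n. rewrite <- Eul_iter by auto. field. apply Eul_nz; auto.
    assert (HL : is_lim_seq (fun n => Eul q (q ^ n * z) * / Eul q z) (1 * / Eul q z)).
    { apply is_lim_seq_mult'. apply Eul_lim; auto. apply is_lim_seq_const. }
    rewrite Rmult_1_l in HL. exact HL. }
  rewrite (is_lim_seq_unique _ _ H). reflexivity.
Qed.

Lemma euler_series q z : 0 < q < 1 -> Rabs z < 1 ->
  is_series (fun n => z ^ n / qpoch q q n) (/ qpoch_inf z q).
Proof.
  intros Hq Hz. rewrite qpoch_inf_Eul, Rinv_inv by auto.
  apply Series_correct, Eul_ex; auto.
Qed.

Lemma qpoch_inf_nz q z : 0 < q < 1 -> Rabs z < 1 -> qpoch_inf z q <> 0.
Proof. intros. rewrite qpoch_inf_Eul by auto. apply Rinv_neq_0_compat, Eul_nz; auto. Qed.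

Lemma cR_mult (f g : R -> R) (x : R) : continuous f x -> continuous g x -> continuous (fun y => f y * g y) x.
Proof. intros H1 H2. exact (continuous_mult (K:=R_AbsRing) f g x H1 H2). Qed.
Lemma cR_plus (f g : R -> R) (x : R) : continuous f x -> continuous g x -> continuous (fun y => f y + g y) x.
Proof. intros H1 H2. exact (continuous_plus (V:=R_NormedModule) f g x H1 H2). Qed.
Lemma cR_opp (f : R -> R) (x : R) : continuous f x -> continuous (fun y => - f y) x.
Proof. intros H1. exact (continuous_opp (V:=R_NormedModule) f x H1). Qed.
Lemma cR_minus (f g : R -> R) (x : R) : continuous f x -> continuous g x -> continuous (fun y => f y - g y) x.
Proof. intros H1 H2. apply cR_plus; auto. apply cR_opp; auto. Qed.
Lemma cR_const (c : R) (x : R) : continuous (fun _ => c) x.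
Proof. apply continuous_const. Qed.
Lemma cR_id (x : R) : continuous (fun y : R => y) x.
Proof. apply continuous_id. Qed.
Lemma cR_inv (f : R -> R) (x : R) : continuous f x -> f x <> 0 -> continuous (fun y => / f y) x.
Proof. intros; apply continuous_Rinv_comp; auto. Qed.
Lemma cR_div (f g : R -> R) (x : R) : continuous f x -> continuous g x -> g x <> 0 -> continuous (fun y => f y / g y) x.
Proof. intros. apply cR_mult; auto. apply cR_inv; auto. Qed.
Lemma cR_pow (f : R -> R) n (x : R) : continuous f x -> continuous (fun y => f y ^ n) x.
Proof. intro H. induction n; simpl. apply cR_const. apply cR_mult; auto. Qed.
Lemma cR_sum (f : R -> nat -> R) n x : (forall k, (k <= n)%nat -> continuous (fun y => f y k) x) ->
  continuous (fun y => sum_f_R0 (f y) n) x.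
Proof. intro H. induction n; simpl. apply H; lia. apply cR_plus. apply IHn; intros; apply H; lia. apply H; lia. Qed.
Lemma cR_ext (f g : R -> R) x : (forall y, f y = g y) -> continuous f x -> continuous g x.
Proof. intros H1 H2. apply (continuous_ext f g x H1 H2). Qed.

Lemma cont_left (f : R -> R) : continuous f 1 -> filterlim f (at_left 1) (locally (f 1)).
Proof. intro H. eapply filterlim_filter_le_1; [|exact H]. apply filter_le_within. Qed.

Lemma cR_qint n (x : R) : continuous (fun q => qint q n) x.
Proof. induction n; simpl. apply cR_const. apply cR_plus; auto. apply cR_pow, cR_id. Qed.
Lemma cR_qfact n (x : R) : continuous (fun q => qfact q n) x.
Proof. induction n. apply cR_const. exact (cR_mult _ _ _ IHn (cR_qint (S n) x)). Qed.

Lemma qint_1 n : qint 1 n = INR n.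
Proof. induction n; simpl qint. reflexivity. rewrite IHn, pow1, S_INR. reflexivity. Qed.
Lemma qfact_1 n : qfact 1 n = INR (fact n).
Proof.
  induction n. reflexivity. change (qfact 1 (S n)) with (qfact 1 n * qint 1 (S n)).
  rewrite IHn, qint_1, fact_simpl, mult_INR. ring.
Qed.

Lemma pow_le1 q n : 0 <= q <= 1 -> q ^ n <= 1.
Proof. intro Hq. induction n; simpl; [lra|]. pose proof (pow_le q n ltac:(lra)). nra. Qed.

Lemma qint_le q n : 0 <= q <= 1 -> qint q n <= INR n.
Proof.
  intro Hq. induction n; simpl qint. simpl; lra. rewrite S_INR.
  assert (q ^ n <= 1) by (apply pow_le1; lra).
  lra.
Qed.

Lemma bern q n : 0 <= q -> 1 - INR n * (1 - q) <= q ^ n.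
Proof.
  intro Hq. induction n. simpl; lra.
  rewrite S_INR. simpl pow. pose proof (pos_INR n).
  assert (0 <= INR n * ((1 - q) * (1 - q))) by (apply Rmult_le_pos; [lra| apply Rle_0_sqr]).
  nra.
Qed.

Lemma qint_lower q n : 0 <= q <= 1 -> INR n * (1 - INR n * (1 - q)) <= qint q n.
Proof.
  intro Hq. induction n. simpl; lra.
  simpl qint. rewrite S_INR. pose proof (bern q n ltac:(lra)). pose proof (pos_INR n). nra.
Qed.

Lemma qint_mono_n q n m : 0 <= q -> (n <= m)%nat -> qint q n <= qint q m.
Proof.
  intros Hq H. induction H. lra. simpl. pose proof (pow_le q m Hq). lra.
Qed.

Lemma qfact_pos q n : 0 <= q -> 0 < qfact q n.
Proof. intro. pose proof (qfact_ge1 q n H). lra. Qed.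

Lemma qfact_geom (A : R) : 0 <= A -> exists q0 K, 0 < q0 < 1 /\
  forall q, q0 <= q < 1 -> forall n, A ^ n / qfact q n <= K * (/ 2) ^ n.
Proof.
  intro HA. destruct (INR_archimed 1 (4 * A)) as [D0 HD0]; [lra|].
  set (D := S D0).
  assert (HD : INR D > 4 * A /\ 1 <= INR D).
  { unfold D. rewrite S_INR. pose proof (pos_INR D0). lra. }
  clearbody D.
  exists (1 - / (2 * INR D)), ((A + 1) ^ D * 2 ^ D).
  assert (0 < / (2 * INR D) <= / 2).
  { split. apply Rinv_0_lt_compat; lra. apply Rinv_le_contravar; lra. }
  split; [lra|].
  intros q Hq.
  assert (Hq1 : 1/2 <= q < 1) by lra.
  assert (HqD : 2 * A <= qint q D).
  { pose proof (qint_lower q D ltac:(lra)).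
    assert (INR D * (1 - q) <= / 2).
    { replace (/ 2) with (INR D * / (2 * INR D)) by (field; lra).
      apply Rmult_le_compat_l; lra. }
    nra. }
  assert (Claim1 : forall n, A ^ n / qfact q n <= (A + 1) ^ n).
  { intro n. pose proof (qfact_ge1 q n ltac:(lra)).
    assert (A ^ n <= (A + 1) ^ n) by (apply pow_incr; lra).
    assert (0 <= A ^ n) by (apply pow_le; lra).
    unfold Rdiv. apply Rle_trans with (A ^ n * 1).
    apply Rmult_le_compat_l. lra. rewrite <- Rinv_1. apply Rinv_le_contravar; lra. lra. }
  assert (Claim2 : forall k, A ^ (D + k) / qfact q (D + k) <= A ^ D / qfact q D * (/ 2) ^ k).
  { induction k. rewrite Nat.add_0_r. simpl. lra.
    rewrite Nat.add_succ_r. change (qfact q (S (D + k))) with (qfact q (D + k) * qint q (S (D + k))).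
    change (A ^ S (D + k)) with (A * A ^ (D + k)). change ((/ 2) ^ S k) with (/ 2 * (/ 2) ^ k).
    assert (Hqi : qint q D <= qint q (S (D + k))) by (apply qint_mono_n; [lra|lia]).
    pose proof (qfact_pos q (D + k) ltac:(lra)).
    assert (0 < qint q (S (D + k))) by (pose proof (qint_ge1 q (S (D + k)) ltac:(lra) ltac:(lia)); lra).
    assert (0 <= A ^ (D + k)) by (apply pow_le; lra).
    replace (A * A ^ (D + k) / (qfact q (D + k) * qint q (S (D + k)))) with
      (A ^ (D + k) / qfact q (D + k) * (A / qint q (S (D + k)))) by (field; lra).
    assert (A / qint q (S (D + k)) <= / 2).
    { apply (Rmult_le_reg_r (qint q (S (D + k)))); [lra|]. unfold Rdiv.
      rewrite Rmult_assoc, Rinv_l by lra. lra. }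
    assert (0 <= A / qint q (S (D + k))) by (unfold Rdiv; apply Rmult_le_pos; [lra|apply Rlt_le, Rinv_0_lt_compat; lra]).
    assert (0 <= A ^ (D + k) / qfact q (D + k)) by (unfold Rdiv; apply Rmult_le_pos; [lra|apply Rlt_le, Rinv_0_lt_compat; lra]).
    replace (A ^ D / qfact q D * (/ 2 * (/ 2) ^ k)) with (A ^ D / qfact q D * (/ 2) ^ k * / 2) by ring.
    apply Rmult_le_compat; auto. }
  intro n. destruct (Compare_dec.le_lt_dec D n) as [Hn|Hn].
  - replace n with (D + (n - D))%nat by lia.
    eapply Rle_trans. apply Claim2. 
    rewrite pow_add. rewrite <- Rmult_assoc.
    apply Rmult_le_compat_r. apply pow_le; lra.
    eapply Rle_trans. apply Claim1. rewrite <- Rpow_mult_distr.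
    rewrite !Rpow_mult_distr, Rmult_assoc, <- Rpow_mult_distr. replace (2 * / 2) with 1 by field. rewrite pow1, Rmult_1_r. lra.
  - eapply Rle_trans. apply Claim1.
    assert ((A + 1) ^ n <= (A + 1) ^ D) by (apply Rle_pow; [lra|lia]).
    assert (1 <= 2 ^ D * (/ 2) ^ n).
    { replace D with (n + (D - n))%nat by lia. rewrite pow_add.
      replace (2 ^ n * 2 ^ (D - n) * (/ 2) ^ n) with ((2 * / 2) ^ n * 2 ^ (D - n)) by (rewrite Rpow_mult_distr; ring).
      replace (2 * / 2) with 1 by field. rewrite pow1. rewrite Rmult_1_l.
      apply pow_R1_Rle; lra. }
    assert (0 <= (A + 1) ^ D) by (apply pow_le; lra).
    rewrite Rmult_assoc. nra.
Qed.

Section LimR.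
Context {F : (R -> Prop) -> Prop} {FF : Filter F}.
Lemma lim_mult (f g : R -> R) x y : filterlim f F (locally x) -> filterlim g F (locally y) ->
  filterlim (fun q => f q * g q) F (locally (x * y)).
Proof. intros H1 H2. apply (filterlim_comp_2 _ _ Rmult H1 H2). exact (filterlim_mult (K:=R_AbsRing) x y). Qed.
Lemma lim_plus (f g : R -> R) x y : filterlim f F (locally x) -> filterlim g F (locally y) ->
  filterlim (fun q => f q + g q) F (locally (x + y)).
Proof. intros H1 H2. apply (filterlim_comp_2 _ _ Rplus H1 H2). exact (filterlim_plus (V:=R_NormedModule) x y). Qed.
Lemma lim_cont (f : R -> R) (h : R -> R) x : filterlim f F (locally x) -> continuous h x ->
  filterlim (fun q => h (f q)) F (locally (h x)).
Proof. intros H1 H2. exact (filterlim_comp _ _ _ f h F (locally x) (locally (h x)) H1 H2). Qed.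
Lemma lim_inv (f : R -> R) x : filterlim f F (locally x) -> x <> 0 ->
  filterlim (fun q => / f q) F (locally (/ x)).
Proof. intros H1 H2. apply (lim_cont f (fun y => / y)); auto. apply (continuous_Rinv x H2). Qed.
Lemma lim_div (f g : R -> R) x y : filterlim f F (locally x) -> filterlim g F (locally y) -> y <> 0 ->
  filterlim (fun q => f q / g q) F (locally (x / y)).
Proof. intros. apply lim_mult; auto. apply lim_inv; auto. Qed.
Lemma lim_pow (f : R -> R) x n : filterlim f F (locally x) -> filterlim (fun q => f q ^ n) F (locally (x ^ n)).
Proof. intro H. apply (lim_cont f (fun y => y ^ n)); auto. apply cR_pow, cR_id. Qed.
Lemma lim_const (c : R) : filterlim (fun _ : R => c) F (locally c).
Proof. apply filterlim_const. Qed.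
End LimR.

Lemma at_left_near (c : R) : c < 1 -> at_left 1 (fun q => c < q < 1).
Proof.
  intro Hc. assert (Hp : 0 < 1 - c) by lra. exists (mkposreal _ Hp).
  intros y Hy Hlt. apply (proj1 (ballR _ _ _)) in Hy. simpl in Hy.
  apply Rabs_def2 in Hy. lra.
Qed.

Lemma exp_series a0 : is_series (fun n => a0 ^ n / INR (fact n)) (exp a0).
Proof.
  pose proof (is_exp_Reals a0) as H. unfold is_pseries in H.
  apply (isR_ext (fun k => scal (pow_n a0 k) (/ INR (fact k)))); [|exact H].
  intro n. rewrite pow_n_pow. reflexivity.
Qed.

Lemma qpinf_lim (a : R -> R) (a0 : R) : filterlim a (at_left 1) (locally a0) ->
  filterlim (fun q => qpoch_inf ((1 - q) * a q) q) (at_left 1) (locally (exp (- a0))).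
Proof.
  intro Ha.
  set (A := Rabs a0 + 1).
  assert (HA : 1 <= A) by (unfold A; pose proof (Rabs_pos a0); lra).
  destruct (qfact_geom A ltac:(lra)) as [q0 [K [Hq0 Hb]]].
  set (f := fun q n => a q ^ n / qfact q n).
  assert (Hev : at_left 1 (fun q => Rabs (a q - a0) < 1 /\ q0 < q < 1 /\ 1 - / (2 * A) < q < 1)).
  { apply filter_and.
    - pose proof (proj1 (filterlim_locally a a0) Ha (mkposreal 1 Rlt_0_1)) as H.
      apply (filter_imp _ _ (fun x Hx => proj1 (ballR _ _ _) Hx) H).
    - apply filter_and; apply at_left_near; try lra.
      assert (0 < / (2 * A)) by (apply Rinv_0_lt_compat; lra). lra. }
  assert (Hser : at_left 1 (fun q => qpoch_inf ((1 - q) * a q) q = / Series (f q))).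
  { generalize Hev; apply filter_imp. intros q [H1 [H2 H3]].
    assert (Haq : Rabs (a q) <= A) by (unfold A; pose proof (Rabs_triang_inv (a q) a0); lra).
    assert (Hz : Rabs ((1 - q) * a q) < 1).
    { rewrite Rabs_mult, Rabs_right by lra.
      assert (1 - q < / (2 * A)) by lra.
      assert ((1 - q) * Rabs (a q) <= / (2 * A) * A) by (apply Rmult_le_compat; try lra; apply Rabs_pos).
      replace (/ (2 * A) * A) with (/ 2) in H0 by (field; lra). lra. }
    rewrite qpoch_inf_Eul by (auto; lra). f_equal. unfold Eul. apply Series_ext.
    intro n. unfold f. rewrite qpoch_qq, Rpow_mult_distr. field. split.
    pose proof (qfact_pos q n ltac:(lra)); lra. apply pow_nonzero; lra. }
  assert (HT : filterlim (fun q => Series (f q)) (at_left 1) (locally (Series (fun n => a0 ^ n / INR (fact n))))).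
  { apply (tannery _ f _ K (/ 2) 0); [lra| |].
    - intro j. unfold f. apply lim_div. apply lim_pow; auto.
      rewrite <- qfact_1. apply cont_left, cR_qfact. apply not_0_INR, fact_neq_0.
    - generalize Hev; apply filter_imp. intros q [H1 [H2 H3]] j _.
      assert (Haq : Rabs (a q) <= A) by (unfold A; pose proof (Rabs_triang_inv (a q) a0); lra).
      eapply Rle_trans; [|apply (Hb q); lra]. unfold f.
      pose proof (qfact_pos q j ltac:(lra)).
      unfold Rdiv. rewrite Rabs_mult, <- RPow_abs, Rabs_inv, (Rabs_right (qfact q j)) by lra.
      apply Rmult_le_compat_r. apply Rlt_le, Rinv_0_lt_compat; lra.
      apply pow_incr. split; [apply Rabs_pos|lra]. }
  rewrite (is_series_unique _ _ (exp_series a0)) in HT.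
  apply lim_inv in HT; [|apply Rgt_not_eq, exp_pos].
  rewrite <- exp_Ropp in HT.
  eapply filterlim_ext_loc; [|exact HT].
  apply (filter_imp _ _ (fun q H => eq_sym H) Hser).
Qed.

Fixpoint qrise (q : R) (a b : nat) : R :=
  match b with O => 1 | S b' => qrise q a b' * qint q (a + S b') end.
Fixpoint negp (q : R) (m k : nat) : R :=
  match k with O => 1 | S k' => negp q m k' * (- qint q (m - k') / q ^ (m - k')) end.
Definition Vg (q lam : R) (n d : nat) : R :=
  sum_f_R0 (fun k => negp q n k * qrise q (d + k) (n - k) * q ^ k * lam ^ k / qfact q k) n.

Lemma qint_S q n : 1 - q ^ n = (1 - q) * qint q n.
Proof. rewrite qint_eq. reflexivity. Qed.

Lemma qpoch_split q a b : qpoch q q (a + b) = qpoch q q a * (1 - q) ^ b * qrise q a b.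
Proof.
  induction b. rewrite Nat.add_0_r. simpl. ring.
  rewrite Nat.add_succ_r. simpl qpoch. rewrite IHb. simpl qrise.
  replace (1 - q * q ^ (a + b)) with (1 - q ^ (a + S b)) by (rewrite Nat.add_succ_r; simpl; ring).
  rewrite qint_S. simpl pow. ring.
Qed.

Lemma qpoch_shift q d k : qpoch (q ^ d * q) q k = (1 - q) ^ k * qrise q d k.
Proof.
  induction k. simpl. ring.
  simpl qpoch. rewrite IHk. simpl qrise.
  replace (1 - q ^ d * q * q ^ k) with (1 - q ^ (d + S k)) by (rewrite pow_add; simpl; ring).
  rewrite qint_S. simpl pow. ring.
Qed.

Lemma qpoch_neg q m k : 0 < q -> (k <= m)%nat -> qpoch (/ q ^ m) q k = (1 - q) ^ k * negp q m k.
Proof.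
  intros Hq. induction k; intro Hk. simpl. ring.
  simpl qpoch. rewrite IHk by lia. simpl negp.
  assert (Hm : q ^ m = q ^ (m - k) * q ^ k) by (rewrite <- pow_add; f_equal; lia).
  assert (q ^ (m - k) <> 0) by (apply pow_nonzero; lra).
  assert (q ^ k <> 0) by (apply pow_nonzero; lra).
  rewrite Hm. set (P := q ^ (m - k)) in *. set (B := q ^ k) in *.
  assert (HP : P = 1 - (1 - q) * qint q (m - k)) by (unfold P; rewrite qint_eq; ring).
  rewrite HP in *. change ((1 - q) ^ S k) with ((1 - q) * (1 - q) ^ k). field. split; auto.
Qed.

Lemma qrise_pos q a b : 0 <= q -> 0 < qrise q a b.
Proof.
  intro Hq. induction b; simpl. lra.
  pose proof (qint_ge1 q (a + S b) Hq ltac:(lia)). nra.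
Qed.

Lemma wall_eq q lam n d : 0 < q < 1 ->
  qpoch q q (d + n) / qpoch q q d * wall n ((1 - q) * lam) (q ^ d) q = (1 - q) ^ n * Vg q lam n d.
Proof.
  intro Hq. unfold wall, Vg. rewrite !scal_sum. apply sum_eq. intros k Hk.
  rewrite qpoch_neg by (lra || lia). rewrite qpoch_shift.
  replace (d + n)%nat with ((d + k) + (n - k))%nat by lia.
  rewrite (qpoch_split q (d + k) (n - k)), (qpoch_split q d k), (qpoch_qq q k).
  replace ((1 - q) ^ n) with ((1 - q) ^ (n - k) * (1 - q) ^ k) by (rewrite <- pow_add; f_equal; lia).
  pose proof (qpoch_qq_pos q d Hq). pose proof (qrise_pos q d k ltac:(lra)).
  pose proof (qfact_pos q k ltac:(lra)).
  assert ((1 - q) ^ k <> 0) by (apply pow_nonzero; lra).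
  rewrite !Rpow_mult_distr. field. repeat split; try lra; auto.
Qed.

Lemma pj_eq lam q m j : 0 < q < 1 ->
  pj lam q m j = / Nqm q m lam *
    (q ^ (2 * binom2 (Nat.min m j)) * lam ^ (absdiff m j) * Vg q lam (Nat.min m j) (absdiff m j) ^ 2
     / (q ^ (m * j) * qfact q j * qfact q m)).
Proof.
  intro Hq. unfold pj. cbv zeta.
  assert (Hmx : Nat.max m j = (absdiff m j + Nat.min m j)%nat) by (unfold absdiff; lia).
  rewrite Hmx, wall_eq by auto.
  rewrite !(qpoch_qq q j), !(qpoch_qq q m).
  assert (Hp : (1 - q) ^ j * (1 - q) ^ m = (1 - q) ^ absdiff m j * (1 - q) ^ Nat.min m j * (1 - q) ^ Nat.min m j).
  { rewrite <- !pow_add. f_equal. unfold absdiff; lia. }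
  unfold Rdiv. rewrite !Rinv_mult. set (IN := / Nqm q m lam). clearbody IN.
  pose proof (qfact_pos q j ltac:(lra)). pose proof (qfact_pos q m ltac:(lra)).
  assert (q ^ (m * j) <> 0) by (apply pow_nonzero; lra).
  assert (Hn : forall n, (1 - q) ^ n <> 0) by (intro; apply pow_nonzero; lra).
  pose proof (Hn j). pose proof (Hn m). pose proof (Hn (absdiff m j)). pose proof (Hn (Nat.min m j)).
  set (A := (1 - q) ^ absdiff m j) in *. set (B := (1 - q) ^ Nat.min m j) in *.
  set (C := (1 - q) ^ j) in *. set (D := (1 - q) ^ m) in *.
  clearbody A B C D.
  assert (HC : C = A * B * B / D) by (rewrite <- Hp; field; auto).
  rewrite HC. field. repeat split; try lra; auto.
Qed.

Lemma sum_rev (f : nat -> R) n : sum_f_R0 f n = sum_f_R0 (fun k => f (n - k)%nat) n.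
Proof.
  induction n. reflexivity.
  rewrite tech5, IHn. rewrite (decomp_sum (fun k => f (S n - k)%nat)) by lia.
  simpl pred. rewrite Nat.sub_0_r. rewrite Rplus_comm. f_equal.
Qed.

Lemma sum_ext_zero (f : nat -> R) n N : (n <= N)%nat -> (forall k, (n < k <= N)%nat -> f k = 0) ->
  sum_f_R0 f N = sum_f_R0 f n.
Proof.
  intros H Hz. induction H. reflexivity.
  rewrite tech5, IHle. rewrite Hz by lia. ring. intros k Hk; apply Hz; lia.
Qed.

Lemma sum_pascal (a b c : nat -> R) N : a O = b O -> (forall k, a (S k) = b (S k) + c k) ->
  sum_f_R0 a (S N) = sum_f_R0 b (S N) + sum_f_R0 c N.
Proof.
  intros H0 HS. induction N. simpl. rewrite H0, HS. ring.
  rewrite tech5, IHN, (tech5 b (S N)), (tech5 c N), HS. ring.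
Qed.

Lemma sum_shift_zero (h : nat -> R) a b : (forall k, (k < a)%nat -> h k = 0) ->
  sum_f_R0 h (a + b) = sum_f_R0 (fun r => h (a + r)%nat) b.
Proof.
  intro Hz. induction b.
  - rewrite Nat.add_0_r. simpl. destruct a. reflexivity.
    rewrite tech5. rewrite (sum_eq _ (fun _ => 0)). rewrite sum_cte. rewrite Nat.add_0_r. ring.
    intros; apply Hz; lia.
  - rewrite Nat.add_succ_r, tech5, IHb. simpl. rewrite Nat.add_succ_r. reflexivity.
Qed.

Fixpoint ffr (x : R) (k : nat) : R :=
  match k with O => 1 | S k' => x * ffr (x - 1) k' end.

Lemma ffr_bot x k : ffr x (S k) = ffr x k * (x - INR k).
Proof.
  revert x. induction k; intro x. simpl. ring.
  change (ffr x (S (S k))) with (x * ffr (x - 1) (S k)). rewrite IHk.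
  change (ffr x (S k)) with (x * ffr (x - 1) k). rewrite S_INR. ring.
Qed.

Lemma ffr_shift x r : ffr (x + 1) (S r) = ffr x (S r) + INR (S r) * ffr x r.
Proof.
  change (ffr (x + 1) (S r)) with ((x + 1) * ffr (x + 1 - 1) r).
  replace (x + 1 - 1) with x by ring. rewrite ffr_bot, S_INR. ring.
Qed.

Lemma ffr_zero n k : (n < k)%nat -> ffr (INR n) k = 0.
Proof.
  revert k. induction n; intros k Hk.
  - destruct k. lia. simpl. ring.
  - destruct k. lia. change (ffr (INR (S n)) (S k)) with (INR (S n) * ffr (INR (S n) - 1) k).
    rewrite S_INR. replace (INR n + 1 - 1) with (INR n) by ring.
    rewrite IHn by lia. ring.
Qed.

Lemma ffr_fact n k : (k <= n)%nat -> ffr (INR n) k = INR (fact n) / INR (fact (n - k)).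
Proof.
  revert n. induction k; intros n Hk.
  - rewrite Nat.sub_0_r. simpl. field. apply INR_fact_neq_0.
  - destruct n. lia. change (ffr (INR (S n)) (S k)) with (INR (S n) * ffr (INR (S n) - 1) k).
    rewrite S_INR. replace (INR n + 1 - 1) with (INR n) by ring.
    rewrite IHk by lia. simpl (S n - S k)%nat. rewrite fact_simpl, mult_INR, S_INR.
    field. apply INR_fact_neq_0.
Qed.

Definition cb (m k : nat) : R := ffr (INR m) k / INR (fact k).

Lemma cb_pascal m k : cb (S m) (S k) = cb m (S k) + cb m k.
Proof.
  unfold cb. rewrite S_INR, ffr_shift. rewrite fact_simpl, mult_INR.
  pose proof (INR_fact_neq_0 k). assert (INR (S k) <> 0) by (apply not_0_INR; lia).
  field. auto.
Qed.

Lemma cb_0 m : cb m 0 = 1.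
Proof. unfold cb. simpl. field. Qed.

Lemma cb_zero m k : (m < k)%nat -> cb m k = 0.
Proof. intro H. unfold cb. rewrite ffr_zero by auto. unfold Rdiv; ring. Qed.

Lemma cb_fact m k : (k <= m)%nat -> cb m k = INR (fact m) / (INR (fact k) * INR (fact (m - k))).
Proof.
  intro H. unfold cb. rewrite ffr_fact by auto. pose proof (INR_fact_neq_0 k).
  pose proof (INR_fact_neq_0 (m - k)). field. auto.
Qed.

Section Alpha.
Variable lam : R.

Definition alpha (m : nat) (x : R) : R :=
  sum_f_R0 (fun k => cb m k * (- lam) ^ k * ffr x (m - k)) m.

Lemma alpha_0 x : alpha 0 x = 1.
Proof. unfold alpha. simpl. rewrite cb_0. ring. Qed.

Lemma alpha_R1 m x : alpha (S m) x = x * alpha m (x - 1) - lam * alpha m x.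
Proof.
  unfold alpha at 1.
  rewrite (sum_pascal _ (fun k => cb m k * (- lam) ^ k * ffr x (S m - k))
                        (fun k => cb m k * (- lam) ^ S k * ffr x (S m - S k))).
  - rewrite tech5, (cb_zero m (S m)) by lia.
    assert (E1 : sum_f_R0 (fun k => cb m k * (- lam) ^ k * ffr x (S m - k)) m = x * alpha m (x - 1)).
    { unfold alpha. rewrite scal_sum. apply sum_eq. intros k Hk.
      replace (S m - k)%nat with (S (m - k)) by lia. simpl ffr. ring. }
    assert (E2 : sum_f_R0 (fun k => cb m k * (- lam) ^ S k * ffr x (S m - S k)) m = - lam * alpha m x).
    { unfold alpha. rewrite scal_sum. apply sum_eq. intros k Hk. simpl (S m - S k)%nat. simpl pow. ring. }
    rewrite E1, E2. ring.
  - rewrite !cb_0. reflexivity.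
  - intro k. rewrite cb_pascal. ring.
Qed.

Lemma cb_absorb n k : cb (S n) k * INR (S n - k) = INR (S n) * cb n k.
Proof.
  unfold cb. destruct (Compare_dec.le_lt_dec k n) as [Hk|Hk].
  - assert (ffr (INR (S n)) (S k) = ffr (INR (S n)) k * (INR (S n) - INR k)) by apply ffr_bot.
    change (ffr (INR (S n)) (S k)) with (INR (S n) * ffr (INR (S n) - 1) k) in H.
    rewrite S_INR in H at 2. replace (INR n + 1 - 1) with (INR n) in H by ring.
    rewrite minus_INR by lia. 
    replace (ffr (INR (S n)) k / INR (fact k) * (INR (S n) - INR k)) with
      ((ffr (INR (S n)) k * (INR (S n) - INR k)) / INR (fact k)) by (field; apply INR_fact_neq_0).
    rewrite <- H. field. apply INR_fact_neq_0.
  - destruct (Nat.eq_dec k (S n)) as [->|Hk'].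
    + rewrite Nat.sub_diag. change (INR 0) with 0. rewrite (ffr_zero n (S n)) by lia. unfold Rdiv; ring.
    + rewrite (ffr_zero n k) by lia. rewrite (ffr_zero (S n) k) by lia. unfold Rdiv; ring.
Qed.

Lemma alpha_R2 n x : alpha n (x + 1) = INR n * alpha (pred n) x + alpha n x.
Proof.
  destruct n as [|n].
  - rewrite !alpha_0. simpl. ring.
  - unfold alpha. simpl pred.
    rewrite (tech5 (fun k => cb (S n) k * (- lam) ^ k * ffr (x + 1) (S n - k))).
    rewrite (tech5 (fun k => cb (S n) k * (- lam) ^ k * ffr x (S n - k))).
    rewrite !Nat.sub_diag.
    assert (E : sum_f_R0 (fun k => cb (S n) k * (- lam) ^ k * ffr (x + 1) (S n - k)) n =
      INR (S n) * sum_f_R0 (fun k => cb n k * (- lam) ^ k * ffr x (n - k)) n +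
      sum_f_R0 (fun k => cb (S n) k * (- lam) ^ k * ffr x (S n - k)) n).
    { rewrite scal_sum, <- sum_plus. apply sum_eq. intros k Hk.
      replace (S n - k)%nat with (S (n - k)) by lia.
      rewrite ffr_shift.
      replace (INR (S (n - k))) with (INR (S n - k)) by (f_equal; lia).
      replace (cb n k * (- lam) ^ k * ffr x (n - k) * INR (S n)) with
        (INR (S n) * cb n k * (- lam) ^ k * ffr x (n - k)) by ring.
      rewrite <- cb_absorb. replace (S n - k)%nat with (S (n - k)) by lia. ring. }
    rewrite E. simpl ffr. ring.
Qed.

End Alpha.

Section HSer.
Variables lam w : R.
Let c := w - lam.

Definition T (m n j : nat) : R := w ^ j / INR (fact j) * alpha lam m (INR j) * alpha lam n (INR j).
Definition Cl (m n : nat) : R :=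
  exp w * sum_f_R0 (fun i => cb m i * ffr (INR n) i * w ^ i * c ^ (m + n - 2 * i)) m.

Lemma Cl_rec m n : Cl (S m) n = c * Cl m n + INR n * w * Cl m (pred n).
Proof.
  unfold Cl.
  set (F := fun i => ffr (INR n) i * w ^ i * c ^ (S m + n - 2 * i)).
  rewrite (sum_eq (fun i => cb (S m) i * ffr (INR n) i * w ^ i * c ^ (S m + n - 2 * i))
                  (fun i => cb (S m) i * F i)) by (intros; unfold F; ring).
  rewrite (sum_pascal _ (fun i => cb m i * F i) (fun i => cb m i * F (S i))).
  2: { rewrite !cb_0; reflexivity. }
  2: { intro k. rewrite cb_pascal. ring. }
  rewrite tech5, (cb_zero m (S m)) by lia. rewrite Rmult_0_l, Rplus_0_r.
  assert (E1 : sum_f_R0 (fun i => cb m i * F i) m =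
               c * sum_f_R0 (fun i => cb m i * ffr (INR n) i * w ^ i * c ^ (m + n - 2 * i)) m).
  { rewrite scal_sum. apply sum_eq. intros i Hi. unfold F.
    destruct (Compare_dec.le_lt_dec i n) as [Hin|Hin].
    - replace (S m + n - 2 * i)%nat with (S (m + n - 2 * i)) by lia. simpl pow. ring.
    - rewrite ffr_zero by lia. ring. }
  assert (E2 : sum_f_R0 (fun i => cb m i * F (S i)) m =
               INR n * w * sum_f_R0 (fun i => cb m i * ffr (INR (pred n)) i * w ^ i * c ^ (m + pred n - 2 * i)) m).
  { rewrite scal_sum. apply sum_eq. intros i Hi. unfold F.
    destruct n as [|n'].
    - rewrite (ffr_zero 0 (S i)) by lia. simpl INR. ring.
    - change (ffr (INR (S n')) (S i)) with (INR (S n') * ffr (INR (S n') - 1) i).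
      rewrite S_INR at 2. replace (INR n' + 1 - 1) with (INR n') by ring.
      simpl pred. replace (S m + S n' - 2 * S i)%nat with (m + n' - 2 * i)%nat by lia.
      simpl pow. ring. }
  rewrite E1, E2. ring.
Qed.

Lemma T_S m n i : T (S m) n (S i) = w * (INR n * T m (pred n) i + T m n i) - lam * T m n (S i).
Proof.
  unfold T. rewrite alpha_R1.
  replace (INR (S i) - 1) with (INR i) by (rewrite S_INR; ring).
  replace (alpha lam n (INR (S i))) with (alpha lam n (INR i + 1)) by (rewrite S_INR; reflexivity).
  rewrite alpha_R2.
  rewrite fact_simpl, mult_INR. simpl pow.
  pose proof (INR_fact_neq_0 i). assert (INR (S i) <> 0) by (apply not_0_INR; lia).
  field. auto.
Qed.

Lemma T_0 m n : T (S m) n 0 = - lam * T m n 0.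
Proof. unfold T. rewrite alpha_R1. simpl INR. ring. Qed.

Lemma Hstep m n : is_series (T m n) (Cl m n) -> is_series (T m (pred n)) (Cl m (pred n)) ->
  is_series (T (S m) n) (Cl (S m) n).
Proof.
  intros H1 H2.
  set (b := fun j => match j with O => 0 | S i => w * (INR n * T m (pred n) i + T m n i) end).
  assert (Hb : is_series b (w * (INR n * Cl m (pred n) + Cl m n))).
  { apply isR_decr1. simpl. rewrite Rminus_0_r.
    apply isR_scal. apply isR_plus; auto. apply isR_scal; auto. }
  pose proof (isR_minus _ _ _ _ Hb (isR_scal lam _ _ H1)) as H3.
  rewrite Cl_rec.
  replace (c * Cl m n + INR n * w * Cl m (pred n)) with
    (w * (INR n * Cl m (pred n) + Cl m n) - lam * Cl m n) by (unfold c; ring).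
  apply (isR_ext (fun j => b j - lam * T m n j)); [|exact H3].
  intro j. destruct j. simpl. rewrite T_0. ring. simpl b. rewrite T_S. ring.
Qed.

Lemma T_sym m n j : T m n j = T n m j.
Proof. unfold T. ring. Qed.

Lemma Cl0n n : Cl 0 n = exp w * c ^ n.
Proof. unfold Cl. simpl. rewrite cb_0. try rewrite Nat.sub_0_r. rewrite !Rmult_1_l. reflexivity. Qed.

Lemma Clm0 m : Cl m 0 = exp w * c ^ m.
Proof.
  unfold Cl. rewrite (sum_ext_zero _ 0 m). simpl. rewrite cb_0, Nat.add_0_r, Nat.sub_0_r. ring.
  lia. intros k Hk. rewrite (ffr_zero 0 k) by lia. ring.
Qed.

Lemma Hall m n : is_series (T m n) (Cl m n).
Proof.
  revert n. induction m as [|m IHm].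
  - induction n as [|n IHn].
    + rewrite Cl0n. simpl. rewrite Rmult_1_r.
      apply (isR_ext (fun j => w ^ j / INR (fact j))). intro j. unfold T. rewrite alpha_0. ring.
      apply exp_series.
    + assert (H : is_series (T n 0) (Cl n 0)).
      { rewrite Clm0, <- Cl0n. apply (isR_ext (T 0 n)); auto. intro; apply T_sym. }
      pose proof (Hstep n 0 H H) as H'.
      rewrite Clm0, <- Cl0n in H'. apply (isR_ext (T (S n) 0)); auto. intro; apply T_sym.
  - intro n. apply Hstep; apply IHm.
Qed.
End HSer.

Lemma alpha_sym lam m j : (j <= m)%nat -> alpha lam m (INR j) = (- lam) ^ (m - j) * alpha lam j (INR m).
Proof.
  intro Hjm. unfold alpha.
  set (f := fun k => cb m k * (- lam) ^ k * ffr (INR j) (m - k)).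
  replace (sum_f_R0 f m) with (sum_f_R0 f (m - j + j)) by (f_equal; lia).
  rewrite sum_shift_zero. unfold f.
  2: { intros k Hk. unfold f. rewrite ffr_zero by lia. ring. }
  rewrite scal_sum. apply sum_eq. intros r Hr.
  replace (m - (m - j + r))%nat with (j - r)%nat by lia.
  rewrite pow_add.
  unfold cb. rewrite !ffr_fact by lia.
  replace (m - (m - j + r))%nat with (j - r)%nat by lia.
  replace (j - (j - r))%nat with r by lia.
  replace (m - (j - r))%nat with (m - j + r)%nat by lia.
  pose proof (INR_fact_neq_0 r). pose proof (INR_fact_neq_0 (j - r)).
  pose proof (INR_fact_neq_0 (m - j + r)).
  field. auto.
Qed.

Lemma final_ident lam t m : 0 < lam -> t <> 0 ->
  exp (- lam) * / lam ^ m * / INR (fact m) * Cl lam (lam * t) m m =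
  t ^ m * exp (lam * (t - 1)) * Defs.laguerre0 m (lam * (2 - (t + / t))).
Proof.
  intros Hl Ht. unfold Cl, Defs.laguerre0.
  set (S1 := sum_f_R0 (fun i => cb m i * ffr (INR m) i * (lam * t) ^ i * (lam * t - lam) ^ (m + m - 2 * i)) m).
  assert (HS1 : S1 = sum_f_R0 (fun k => cb m (m - k) * ffr (INR m) (m - k) * (lam * t) ^ (m - k) *
                       (lam * t - lam) ^ (m + m - 2 * (m - k))) m) by (unfold S1; apply sum_rev).
  rewrite HS1. clear HS1 S1.
  assert (HE : exp (lam * (t - 1)) = exp (- lam) * exp (lam * t)) by (rewrite <- exp_plus; f_equal; ring).
  rewrite HE.
  set (S2 := sum_f_R0 _ m).
  set (S3 := sum_f_R0 _ m).
  replace (exp (- lam) * / lam ^ m * / INR (fact m) * (exp (lam * t) * S2)) with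
    (exp (- lam) * exp (lam * t) * (/ lam ^ m * / INR (fact m) * S2)) by ring.
  replace (t ^ m * (exp (- lam) * exp (lam * t)) * S3) with
    (exp (- lam) * exp (lam * t) * (t ^ m * S3)) by ring.
  f_equal. unfold S2, S3.
  rewrite !scal_sum. apply sum_eq. intros k Hk.
  unfold cb. rewrite !ffr_fact by lia.
  replace (m - (m - k))%nat with k by lia.
  replace (m + m - 2 * (m - k))%nat with (2 * k)%nat by lia.
  rewrite pow_mult.
  replace ((lam * t - lam) ^ 2) with (lam ^ 2 * (t - 1) ^ 2) by ring.
  replace (- (lam * (2 - (t + / t)))) with (lam * ((t - 1) ^ 2 / t)) by (field; auto).
  rewrite !Rpow_mult_distr.
  replace (lam ^ m) with (lam ^ (m - k) * lam ^ k) by (rewrite <- pow_add; f_equal; lia).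
  replace (t ^ m) with (t ^ (m - k) * t ^ k) by (rewrite <- pow_add; f_equal; lia).
  rewrite <- pow_mult. replace (lam ^ (2 * k)) with (lam ^ k * lam ^ k) by (rewrite <- pow_add; f_equal; lia).
  unfold Rdiv. rewrite Rpow_mult_distr, pow_inv.
  pose proof (INR_fact_neq_0 k). pose proof (INR_fact_neq_0 (m - k)). pose proof (INR_fact_neq_0 m).
  assert (lam ^ k <> 0) by (apply pow_nonzero; lra).
  assert (lam ^ (m - k) <> 0) by (apply pow_nonzero; lra).
  assert (t ^ k <> 0) by (apply pow_nonzero; auto).
  field. repeat split; auto.
Qed.

Lemma qpoch_zero q m : qpoch 0 q m = 1.
Proof. induction m; simpl. reflexivity. rewrite IHm. ring. Qed.

Lemma cR_qpoch (e : R -> R) m (x : R) : continuous e x -> continuous (fun q => qpoch (e q) q m) x.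
Proof.
  intro He. induction m. apply cR_const.
  exact (cR_mult _ _ _ IHm (cR_minus _ _ _ (cR_const 1 x) (cR_mult _ _ _ He (cR_pow _ m _ (cR_id x))))).
Qed.

Lemma invN_lim m lam : filterlim (fun q => / Nqm q m lam) (at_left 1) (locally (exp (- lam))).
Proof.
  set (e := fun q : R => q * / q ^ m * (1 - q) * lam).
  assert (He : continuous e 1).
  { unfold e. apply cR_mult; [|apply cR_const]. apply cR_mult; [|apply cR_minus; [apply cR_const|apply cR_id]].
    apply cR_mult. apply cR_id. apply cR_inv. apply cR_pow, cR_id. rewrite pow1; lra. }
  assert (H1 : filterlim (fun q => qpoch (e q) q m) (at_left 1) (locally 1)).
  { pose proof (cont_left _ (cR_qpoch e m 1 He)) as H. simpl in H.
    replace (e 1) with 0 in H by (unfold e; ring). rewrite qpoch_zero in H. exact H. }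
  assert (H2 : filterlim (fun q => qpoch_inf ((1 - q) * (lam / q ^ m)) q) (at_left 1) (locally (exp (- lam)))).
  { assert (Ha : filterlim (fun q => lam / q ^ m) (at_left 1) (locally lam)).
    { assert (Hc : continuous (fun q => lam / q ^ m) 1).
      { apply cR_div. apply cR_const. apply cR_pow, cR_id. rewrite pow1; lra. }
      pose proof (cont_left _ Hc) as H. cbv beta in H.
      rewrite pow1, Rdiv_1_r in H. exact H. }
    exact (qpinf_lim _ _ Ha). }
  assert (H3 : filterlim (fun q => q ^ m) (at_left 1) (locally 1)).
  { pose proof (cont_left (fun q => q ^ m) (cR_pow _ m _ (cR_id 1))) as H. cbv beta in H. rewrite pow1 in H. exact H. }
  pose proof (lim_mult (F := at_left 1) _ _ _ _ (lim_inv (F := at_left 1) _ _ H1 ltac:(lra)) (lim_mult (F := at_left 1) _ _ _ _ H3 H2)) as H.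
  replace (/ 1 * (1 * exp (- lam))) with (exp (- lam)) in H by field.
  eapply filterlim_ext; [|exact H].
  intro q. simpl. unfold Nqm. unfold Rdiv. rewrite Rinv_mult, Rinv_inv. unfold e.
  replace (/ q ^ m * (1 - q) * lam) with ((1 - q) * (lam * / q ^ m)) by ring. ring.
Qed.

Lemma qrise_1 a b : qrise 1 a b = ffr (INR (a + b)) b.
Proof.
  induction b. reflexivity.
  simpl qrise. rewrite IHb, qint_1. simpl ffr.
  replace (INR (a + S b) - 1) with (INR (a + b)) by (rewrite Nat.add_succ_r, S_INR; ring). ring.
Qed.

Lemma negp_1 n k : (k <= n)%nat -> negp 1 n k = (-1) ^ k * ffr (INR n) k.
Proof.
  induction k; intro Hk. simpl; ring.
  simpl negp. rewrite IHk by lia. rewrite ffr_bot, qint_1, pow1, minus_INR by lia. simpl pow. field.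
Qed.

Lemma Vg_1 lam n d : Vg 1 lam n d = alpha lam n (INR (d + n)).
Proof.
  unfold Vg, alpha. apply sum_eq. intros k Hk.
  rewrite negp_1, qrise_1, qfact_1, pow1 by auto.
  replace (d + k + (n - k))%nat with (d + n)%nat by lia.
  unfold cb. replace (- lam) with (-1 * lam) by ring. rewrite Rpow_mult_distr. field. apply INR_fact_neq_0.
Qed.

Definition Wf lam m j q :=
  q ^ (2 * binom2 (Nat.min m j)) * lam ^ absdiff m j * Vg q lam (Nat.min m j) (absdiff m j) ^ 2
     / (q ^ (m * j) * qfact q j * qfact q m).

Lemma cR_negp n k (x : R) : x <> 0 -> continuous (fun q => negp q n k) x.
Proof.
  intro Hx. induction k. apply cR_const.
  apply (cR_mult _ _ _ IHk). apply cR_div. apply cR_opp, cR_qint. apply cR_pow, cR_id.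
  apply pow_nonzero; auto.
Qed.

Lemma cR_qrise a b (x : R) : continuous (fun q => qrise q a b) x.
Proof. induction b. apply cR_const. exact (cR_mult _ _ _ IHb (cR_qint _ x)). Qed.

Lemma cR_Vg lam n d : continuous (fun q => Vg q lam n d) 1.
Proof.
  unfold Vg. apply cR_sum. intros k Hk.
  apply cR_div. apply cR_mult; [|apply cR_const]. apply cR_mult; [|apply cR_pow, cR_id].
  apply cR_mult. apply cR_negp; lra. apply cR_qrise. apply cR_qfact.
  rewrite qfact_1. apply INR_fact_neq_0.
Qed.

Lemma cR_Wf lam m j : continuous (Wf lam m j) 1.
Proof.
  unfold Wf. apply cR_div.
  - apply cR_mult. apply cR_mult. apply cR_pow, cR_id. apply cR_const. apply cR_pow, cR_Vg.
  - apply cR_mult. apply cR_mult. apply cR_pow, cR_id. apply cR_qfact. apply cR_qfact.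
  - rewrite pow1, !qfact_1. pose proof (INR_fact_neq_0 j). pose proof (INR_fact_neq_0 m).
    repeat (apply Rmult_integral_contrapositive; split); auto; lra.
Qed.

Lemma pt_lim lam m t j : filterlim (fun q => t ^ j * pj lam q m j) (at_left 1)
  (locally (t ^ j * (exp (- lam) * Wf lam m j 1))).
Proof.
  eapply filterlim_ext_loc.
  2: { apply (lim_mult (F := at_left 1)). apply lim_const.
       apply (lim_mult (F := at_left 1)). apply invN_lim. apply cont_left, cR_Wf. }
  generalize (at_left_near 0 ltac:(lra)). apply filter_imp. intros q Hq.
  rewrite pj_eq by auto. reflexivity.
Qed.

Lemma g_eq lam m t j : 0 < lam ->
  t ^ j * (exp (- lam) * Wf lam m j 1) = exp (- lam) * / lam ^ m * / INR (fact m) * T lam (lam * t) m m j.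
Proof.
  intro Hl. unfold Wf, T. rewrite !pow1, !qfact_1, Vg_1.
  pose proof (INR_fact_neq_0 j). pose proof (INR_fact_neq_0 m).
  destruct (Compare_dec.le_lt_dec m j) as [Hmj|Hmj].
  - replace (Nat.min m j) with m by lia.
    replace (absdiff m j) with (j - m)%nat by (unfold absdiff; lia).
    replace (j - m + m)%nat with j by lia.
    replace (lam ^ m) with (lam ^ m) by reflexivity.
    assert (Hp : lam ^ j = lam ^ (j - m) * lam ^ m) by (rewrite <- pow_add; f_equal; lia).
    rewrite Rpow_mult_distr, Hp.
    assert (lam ^ m <> 0) by (apply pow_nonzero; lra).
    field. repeat split; auto.
  - replace (Nat.min m j) with j by lia.
    replace (absdiff m j) with (m - j)%nat by (unfold absdiff; lia).
    replace (m - j + j)%nat with m by lia.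
    rewrite (alpha_sym lam m j) by lia.
    assert (Hp : lam ^ m = lam ^ j * lam ^ (m - j)) by (rewrite <- pow_add; f_equal; lia).
    rewrite Rpow_mult_distr, Hp.
    set (A := alpha lam j (INR m)). clearbody A.
    replace (lam ^ j * t ^ j / INR (fact j) * ((- lam) ^ (m - j) * A) * ((- lam) ^ (m - j) * A)) with
      (lam ^ j * t ^ j / INR (fact j) * ((- lam) ^ (m - j) * (- lam) ^ (m - j)) * A ^ 2) by ring.
    assert (Hn : (- lam) ^ (m - j) * (- lam) ^ (m - j) = lam ^ (m - j) * lam ^ (m - j)).
    { rewrite <- !Rpow_mult_distr. f_equal. ring. }
    rewrite Hn.
    assert (lam ^ j <> 0) by (apply pow_nonzero; lra).
    assert (lam ^ (m - j) <> 0) by (apply pow_nonzero; lra).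
    field. repeat split; auto.
Qed.


Ltac posr := repeat match goal with |- 0 <= ?a * ?b => apply Rmult_le_pos end; try lra.

Lemma inv_pow_le q n : 1 / 2 <= q -> / q ^ n <= 2 ^ n.
Proof.
  intro Hq. assert ((/ 2) ^ n <= q ^ n) by (apply pow_incr; lra).
  assert (0 < (/ 2) ^ n) by (apply pow_lt; lra).
  replace (2 ^ n) with (/ (/ 2) ^ n) by (rewrite pow_inv, Rinv_inv; reflexivity).
  apply Rinv_le_contravar; lra.
Qed.

Lemma negp_bound q m k : 1 / 2 <= q <= 1 -> (k <= m)%nat -> Rabs (negp q m k) <= (INR m * 2 ^ m) ^ k.
Proof.
  intros Hq. induction k; intro Hk. simpl. rewrite Rabs_R1. lra.
  simpl negp. simpl pow. rewrite Rabs_mult.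
  assert (H1 : Rabs (- qint q (m - k) / q ^ (m - k)) <= INR m * 2 ^ m).
  { unfold Rdiv. rewrite Rabs_mult, Rabs_Ropp, Rabs_inv.
    rewrite (Rabs_right (qint q _)) by (apply Rle_ge, qint_pos; lra).
    rewrite (Rabs_right (q ^ _)) by (apply Rle_ge, pow_le; lra).
    apply Rmult_le_compat. apply qint_pos; lra. apply Rlt_le, Rinv_0_lt_compat, pow_lt; lra.
    eapply Rle_trans. apply qint_le; lra. apply le_INR; lia.
    eapply Rle_trans. apply inv_pow_le; lra. apply Rle_pow; [lra|lia]. }
  pose proof (IHk ltac:(lia)). pose proof (Rabs_pos (negp q m k)).
  pose proof (Rabs_pos (- qint q (m - k) / q ^ (m - k))).
  rewrite Rmult_comm. apply Rmult_le_compat; auto.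
Qed.

Lemma qrise_split q a b c : qrise q a (b + c) = qrise q a b * qrise q (a + b) c.
Proof.
  induction c. rewrite Nat.add_0_r. simpl. ring.
  rewrite Nat.add_succ_r. simpl qrise. rewrite IHc.
  replace (a + S (b + c))%nat with (a + b + S c)%nat by lia. ring.
Qed.

Lemma qrise_ge1 q a b : 0 <= q -> 1 <= qrise q a b.
Proof.
  intro Hq. induction b; simpl. lra.
  pose proof (qint_ge1 q (a + S b) Hq ltac:(lia)). nra.
Qed.

Lemma qfact_split q a b : qfact q (a + b) = qfact q a * qrise q a b.
Proof.
  induction b. rewrite Nat.add_0_r. simpl. ring.
  rewrite Nat.add_succ_r.
  change (qfact q (S (a + b))) with (qfact q (a + b) * qint q (S (a + b))).
  change (qrise q a (S b)) with (qrise q a b * qint q (a + S b)). rewrite IHb.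
  replace (a + S b)%nat with (S (a + b)) by lia. ring.
Qed.

Lemma qrise_le q a b : 0 <= q <= 1 -> qrise q a b <= INR (a + b) ^ b.
Proof.
  intro Hq. induction b. simpl; lra.
  simpl qrise. simpl pow.
  assert (INR (a + b) ^ b <= INR (a + S b) ^ b) by (apply pow_incr; split; [apply pos_INR| apply le_INR; lia]).
  assert (qint q (a + S b) <= INR (a + S b)) by (apply qint_le; lra).
  pose proof (qrise_ge1 q a b ltac:(lra)). pose proof (qint_pos q (a + S b) ltac:(lra)).
  rewrite Rmult_comm. apply Rmult_le_compat; lra.
Qed.

Definition C1 lam m := sum_f_R0 (fun k => (INR m * 2 ^ m * lam) ^ k) m.

Lemma Vg_bound q lam m d : 1 / 2 <= q <= 1 -> 0 < lam ->
  Rabs (Vg q lam m d) <= qrise q d m * C1 lam m.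
Proof.
  intros Hq Hl. unfold Vg, C1.
  eapply Rle_trans; [apply sum_f_R0_triangle|]. rewrite scal_sum. apply sum_Rle. intros k Hk.
  pose proof (qfact_ge1 q k ltac:(lra)).
  assert (Hr : qrise q (d + k) (m - k) <= qrise q d m).
  { replace m with (k + (m - k))%nat at 2 by lia. rewrite qrise_split.
    pose proof (qrise_ge1 q d k ltac:(lra)). pose proof (qrise_ge1 q (d + k) (m - k) ltac:(lra)). nra. }
  unfold Rdiv. rewrite !Rabs_mult, Rabs_inv.
  rewrite (Rabs_right (qrise _ _ _)) by (apply Rle_ge; pose proof (qrise_ge1 q (d + k) (m - k) ltac:(lra)); lra).
  rewrite (Rabs_right (q ^ k)) by (apply Rle_ge, pow_le; lra).
  rewrite (Rabs_right (lam ^ k)) by (apply Rle_ge, pow_le; lra).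
  rewrite (Rabs_right (qfact q k)) by lra.
  rewrite !Rpow_mult_distr.
  pose proof (negp_bound q m k Hq ltac:(lia)). rewrite Rpow_mult_distr in H0.
  assert (q ^ k <= 1) by (apply pow_le1; lra).
  assert (0 <= q ^ k) by (apply pow_le; lra).
  assert (/ qfact q k <= 1) by (rewrite <- Rinv_1; apply Rinv_le_contravar; lra).
  assert (0 <= / qfact q k) by (apply Rlt_le, Rinv_0_lt_compat; lra).
  assert (0 <= lam ^ k) by (apply pow_le; lra).
  pose proof (Rabs_pos (negp q m k)). pose proof (qrise_ge1 q (d + k) (m - k) ltac:(lra)).
  set (a := Rabs (negp q m k)) in *. set (b := qrise q (d + k) (m - k)) in *.
  set (B := INR m ^ k * (2 ^ m) ^ k) in *. set (R := qrise q d m) in *.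
  set (x := q ^ k) in *. set (y := / qfact q k) in *. set (L := lam ^ k) in *.
  clearbody a b B R x y L. replace (B * L * R) with (B * R * 1 * L * 1) by ring.
  repeat (apply Rmult_le_compat; [posr| lra | | lra]); lra.
Qed.

Lemma pow2_ge d : INR d + 1 <= 2 ^ d.
Proof. induction d. simpl; lra. rewrite S_INR. simpl pow. pose proof (pow_R1_Rle 2 d ltac:(lra)). lra. Qed.

Lemma Wf_bound lam m : 0 < lam -> exists q1 B, 0 < q1 < 1 /\
  forall q, q1 <= q < 1 -> forall d, Wf lam m (m + d) q <= B * (/ 2) ^ d.
Proof.
  intro Hl.
  set (A := lam * 2 ^ m * 2 ^ m).
  assert (HA : 0 <= A) by (unfold A; pose proof (pow_lt 2 m ltac:(lra)); nra).
  destruct (qfact_geom A HA) as [q0 [K [Hq0 HK]]].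
  exists (Rmax q0 (1 / 2)), (C1 lam m ^ 2 * INR (m + 1) ^ m * 2 ^ (m * m) * K).
  split. split. apply Rlt_le_trans with q0; [lra|apply Rmax_l]. apply Rmax_lub_lt; lra.
  intros q Hq d.
  assert (Hq1 : q0 <= q < 1) by (split; [apply Rle_trans with (Rmax q0 (1/2)); [apply Rmax_l|lra]|lra]).
  assert (Hq2 : 1 / 2 <= q <= 1) by (split; [apply Rle_trans with (Rmax q0 (1/2)); [apply Rmax_r|lra]|lra]).
  unfold Wf.
  replace (Nat.min m (m + d)) with m by lia.
  replace (absdiff m (m + d)) with d by (unfold absdiff; lia).
  replace (qfact q (m + d)) with (qfact q d * qrise q d m) by (rewrite <- qfact_split; f_equal; lia).
  set (V := Vg q lam m d). set (R := qrise q d m). set (Q := qfact q d).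
  pose proof (Vg_bound q lam m d Hq2 Hl) as HV. fold V R in HV.
  pose proof (qrise_ge1 q d m ltac:(lra)) as HR. fold R in HR.
  pose proof (qfact_ge1 q d ltac:(lra)) as HQ. fold Q in HQ.
  pose proof (qfact_ge1 q m ltac:(lra)) as HQm.
  assert (HC : 0 <= C1 lam m).
  { unfold C1. apply cond_pos_sum. intro k. apply pow_le. pose proof (pow_lt 2 m ltac:(lra)). pose proof (pos_INR m). posr. }
  assert (HV2 : V ^ 2 <= (R * C1 lam m) ^ 2).
  { rewrite <- (pow2_abs V). apply pow_incr. split; [apply Rabs_pos|exact HV]. }
  assert (He : 0 <= q ^ (2 * binom2 m) <= 1) by (split; [apply pow_le; lra| apply pow_le1; lra]).
  assert (Hqi : / q ^ (m * (m + d)) <= 2 ^ (m * (m + d))) by (apply inv_pow_le; lra).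
  assert (Hqi0 : 0 <= / q ^ (m * (m + d))) by (apply Rlt_le, Rinv_0_lt_compat, pow_lt; lra).
  assert (Hm1 : / qfact q m <= 1) by (rewrite <- Rinv_1; apply Rinv_le_contravar; lra).
  assert (Hm0 : 0 <= / qfact q m) by (apply Rlt_le, Rinv_0_lt_compat; lra).
  assert (HL : 0 <= lam ^ d) by (apply pow_le; lra).
  assert (HV0 : 0 <= V ^ 2) by (apply pow2_ge_0).
  assert (E : q ^ (2 * binom2 m) * lam ^ d * V ^ 2 / (q ^ (m * (m + d)) * (Q * R) * qfact q m) =
              q ^ (2 * binom2 m) * lam ^ d * V ^ 2 * / q ^ (m * (m + d)) * / qfact q m * (/ Q * / R)).
  { unfold Rdiv. rewrite !Rinv_mult. ring. }
  rewrite E. clear E.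
  assert (HQR : 0 <= / Q * / R) by (apply Rmult_le_pos; apply Rlt_le, Rinv_0_lt_compat; lra).
  eapply Rle_trans.
  { apply Rmult_le_compat_r. exact HQR.
    apply Rmult_le_compat. posr. lra. 2: exact Hm1.
    apply Rmult_le_compat. posr. lra. 2: exact Hqi.
    apply Rmult_le_compat. posr. lra. 2: exact HV2.
    apply Rmult_le_compat; [lra|lra|exact (proj2 He)|apply Rle_refl]. }
  replace (1 * lam ^ d * (R * C1 lam m) ^ 2 * 2 ^ (m * (m + d)) * 1 * (/ Q * / R)) with
    (C1 lam m ^ 2 * 2 ^ (m * (m + d)) * lam ^ d * R / Q) by (field; lra).
  assert (HRb : R <= INR (m + 1) ^ m * 2 ^ (d * m)).
  { eapply Rle_trans. apply qrise_le; lra.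
    rewrite pow_mult, <- Rpow_mult_distr. apply pow_incr. split. apply pos_INR.
    rewrite !plus_INR. pose proof (pow2_ge d). pose proof (pos_INR d). pose proof (pos_INR m).
    simpl INR. nra. }
  assert (Hfin : lam ^ d * (INR (m + 1) ^ m * 2 ^ (d * m)) * 2 ^ (m * (m + d)) =
                 INR (m + 1) ^ m * 2 ^ (m * m) * A ^ d).
  { unfold A. rewrite !Rpow_mult_distr, <- !pow_mult.
    replace (m * (m + d))%nat with (m * m + m * d)%nat by lia. rewrite pow_add.
    replace (d * m)%nat with (m * d)%nat by lia. ring. }
  pose proof (HK q Hq1 d) as HKd.
  assert (HQ0 : 0 < / Q) by (apply Rinv_0_lt_compat; lra).
  apply Rle_trans with (C1 lam m ^ 2 * (lam ^ d * (INR (m + 1) ^ m * 2 ^ (d * m)) * 2 ^ (m * (m + d))) / Q).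
  { unfold Rdiv. apply Rmult_le_compat_r. lra.
    replace (C1 lam m ^ 2 * 2 ^ (m * (m + d)) * lam ^ d * R) with
      (C1 lam m ^ 2 * (lam ^ d * R * 2 ^ (m * (m + d)))) by ring.
    apply Rmult_le_compat_l. apply pow_le; lra.
    apply Rmult_le_compat_r. apply pow_le; lra.
    apply Rmult_le_compat_l; lra. }
  rewrite Hfin.
  replace (C1 lam m ^ 2 * (INR (m + 1) ^ m * 2 ^ (m * m) * A ^ d) / Q) with
    (C1 lam m ^ 2 * INR (m + 1) ^ m * 2 ^ (m * m) * (A ^ d / Q)) by (field; lra).
  replace (C1 lam m ^ 2 * INR (m + 1) ^ m * 2 ^ (m * m) * K * (/ 2) ^ d) with
    (C1 lam m ^ 2 * INR (m + 1) ^ m * 2 ^ (m * m) * (K * (/ 2) ^ d)) by ring.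
  apply Rmult_le_compat_l.
  { apply Rmult_le_pos. apply Rmult_le_pos. apply pow_le; lra. apply pow_le, pos_INR. apply pow_le; lra. }
  exact HKd.
Qed.

Lemma pj0 lam q j : 0 < q < 1 -> Rabs ((1 - q) * lam) < 1 ->
  pj lam q 0 j = ((1 - q) * lam) ^ j / qpoch q q j * qpoch_inf ((1 - q) * lam) q.
Proof.
  intros Hq Ha. unfold pj, absdiff, Nqm, wall. simpl Nat.max. simpl Nat.min.
  rewrite Nat.sub_0_r. simpl. rewrite Rinv_1, !Rmult_1_l.
  pose proof (qpoch_qq_pos q j Hq). pose proof (qpoch_inf_nz q _ Hq Ha).
  rewrite Rpow_mult_distr. set (A := qpoch_inf _ q). set (B := qpoch q q j). field. split; [unfold B; lra | unfold A; exact H0].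
Qed.

Theorem part1 : forall (q lam t : R),
      0 < q < 1 -> 0 < lam < q ^ 0 / (1 - q) -> Rabs t <= 1 ->
      pgf lam q 0 t =
        (qpoch_inf ((1 - q) * lam) q / qpoch_inf ((1 - q) * lam * t) q).
Proof.
  intros q lam t Hq Hl Ht. simpl in Hl.
  assert (Ha : 0 < (1 - q) * lam < 1).
  { split. apply Rmult_lt_0_compat; lra.
    destruct Hl as [_ Hl].
    apply (Rmult_lt_compat_l (1 - q)) in Hl; [|lra]. replace ((1 - q) * (1 / (1 - q))) with 1 in Hl by (field; lra). lra. }
  assert (Ha' : Rabs ((1 - q) * lam) < 1) by (rewrite Rabs_right; lra).
  assert (Hat : Rabs ((1 - q) * lam * t) < 1).
  { rewrite Rabs_mult. pose proof (Rabs_pos t). pose proof (Rabs_pos ((1 - q) * lam)). nra. }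
  unfold pgf. apply is_series_unique.
  apply isR_ext with (a := fun j => qpoch_inf ((1 - q) * lam) q * (((1 - q) * lam * t) ^ j / qpoch q q j)).
  - intro j. rewrite pj0 by auto. rewrite Rpow_mult_distr. field.
    pose proof (qpoch_qq_pos q j Hq). lra.
  - unfold Rdiv at 2. apply isR_scal. apply euler_series; auto.
Qed.

Lemma Wf_nonneg lam m j q : 0 < q -> 0 < lam -> 0 <= Wf lam m j q.
Proof.
  intros Hq Hl. unfold Wf. unfold Rdiv. apply Rmult_le_pos.
  apply Rmult_le_pos. apply Rmult_le_pos. apply pow_le; lra. apply pow_le; lra. apply pow2_ge_0.
  apply Rlt_le, Rinv_0_lt_compat. pose proof (qfact_pos q j ltac:(lra)). pose proof (qfact_pos q m ltac:(lra)).
  pose proof (pow_lt q (m * j) Hq). apply Rmult_lt_0_compat. apply Rmult_lt_0_compat. all: lra.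
Qed.

Theorem part2 : forall (m : nat) (lam t : R),
      m <> 0%nat -> 0 < lam -> 0 < Rabs t <= 1 ->
      filterlim (fun q => pgf lam q m t) (at_left 1)
        (locally (t ^ m * exp (lam * (t - 1))
                  * laguerre0 m (lam * (2 - (t + / t))))).
Proof.
  intros m lam t Hm Hl Ht.
  assert (Ht0 : t <> 0) by (intro H; subst; rewrite Rabs_R0 in Ht; lra).
  destruct (Wf_bound lam m Hl) as [q1 [B [Hq1 HB]]].
  set (E1 := exp (- lam) + 1).
  assert (HN : at_left 1 (fun q => Rabs (/ Nqm q m lam) <= E1)).
  { pose proof (proj1 (filterlim_locally _ _) (invN_lim m lam) (mkposreal 1 Rlt_0_1)) as H.
    generalize H. apply filter_imp. intros q Hq. apply (proj1 (ballR _ _ _)) in Hq. simpl in Hq.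
    unfold E1. pose proof (Rabs_triang_inv (/ Nqm q m lam) (exp (- lam))).
    rewrite (Rabs_right (exp (- lam))) in H0 by (apply Rle_ge, Rlt_le, exp_pos). lra. }
  assert (HB0 : 0 <= B).
  { pose proof (HB ((q1 + 1) / 2) ltac:(lra) 0%nat). simpl in H.
    pose proof (Wf_nonneg lam m (m + 0) ((q1 + 1) / 2) ltac:(lra) Hl). lra. }
  assert (Hdom : at_left 1 (fun q => forall j, (m <= j)%nat ->
                   Rabs (t ^ j * pj lam q m j) <= (E1 * B * 2 ^ m) * (/ 2) ^ j)).
  { generalize (filter_and _ _ HN (at_left_near q1 ltac:(lra))). apply filter_imp.
    intros q [H1 H2] j Hj.
    rewrite pj_eq by lra. fold (Wf lam m j q).
    replace j with (m + (j - m))%nat by lia. set (d := (j - m)%nat). clearbody d.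
    pose proof (HB q ltac:(lra) d) as Hd.
    pose proof (Wf_nonneg lam m (m + d) q ltac:(lra) Hl) as Hw.
    rewrite !Rabs_mult, (Rabs_right (Wf _ _ _ _)) by lra.
    assert (Htj : Rabs t ^ (m + d) <= 1) by (apply pow_le1; split; [apply Rabs_pos|lra]).
    rewrite <- RPow_abs.
    assert (E : (/ 2) ^ (m + d) * 2 ^ m = (/ 2) ^ d).
    { rewrite pow_add. replace ((/ 2) ^ m * (/ 2) ^ d * 2 ^ m) with (((/ 2) * 2) ^ m * (/ 2) ^ d)
        by (rewrite Rpow_mult_distr; ring). replace (/ 2 * 2) with 1 by field. rewrite pow1; ring. }
    replace (E1 * B * 2 ^ m * (/ 2) ^ (m + d)) with (1 * (E1 * (B * (/ 2) ^ d))) by (rewrite <- E; ring).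
    pose proof (Rabs_pos (/ Nqm q m lam)). pose proof (pow_le (Rabs t) (m + d) (Rabs_pos t)).
    apply Rmult_le_compat; try lra. apply Rmult_le_pos; lra.
    apply Rmult_le_compat; lra. }
  pose proof (tannery (at_left 1) (fun q j => t ^ j * pj lam q m j)
               (fun j => t ^ j * (exp (- lam) * Wf lam m j 1)) (E1 * B * 2 ^ m) (/ 2) m
               ltac:(lra) (pt_lim lam m t) Hdom) as HT.
  unfold pgf.
  replace (t ^ m * exp (lam * (t - 1)) * laguerre0 m (lam * (2 - (t + / t)))) with
    (Series (fun j => t ^ j * (exp (- lam) * Wf lam m j 1))); [exact HT|].
  rewrite (Series_ext _ (fun j => exp (- lam) * / lam ^ m * / INR (fact m) * T lam (lam * t) m m j))
    by (intro j; apply g_eq; auto).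
  rewrite Series_scal_l, (is_series_unique _ _ (Hall lam (lam * t) m m)).
  apply final_ident; auto.
Qed.


Theorem mainTheorem2 :
  (forall (q lam t : R),
      0 < q < 1 -> 0 < lam < q ^ 0 / (1 - q) -> Rabs t <= 1 ->
      pgf lam q 0 t =
        (qpoch_inf ((1 - q) * lam) q / qpoch_inf ((1 - q) * lam * t) q))
  /\
  (forall (m : nat) (lam t : R),
      m <> 0%nat -> 0 < lam -> 0 < Rabs t <= 1 ->
      filterlim (fun q => pgf lam q m t) (at_left 1)
        (locally (t ^ m * exp (lam * (t - 1))
                  * laguerre0 m (lam * (2 - (t + / t)))))).
Proof.
  split. exact part1. exact part2.
Qed.
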